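(* Consider an $N$-player finite-horizon LQ game, viewed as the quadratic game in the stacked inputs $U_1,\ldots,U_N$ described in the context, under its gradient-based learning dynamics with an arbitrary disturbance in player $i$'s gradient. If player $j\neq i$ is disturbance decoupled from player $i$, then $$\begin{bmatrix}B_j^\top\\ B_j^\top A^\top\\ \vdots\\ B_j^\top (A^\top)^{T-1}\end{bmatrix}Q_j\begin{bmatrix}B_i & AB_i & \cdots & A^{T-1}B_i\end{bmatrix}=0.$$ Moreover, if in addition $Q_j$ is positive definite and $T\ge m$, then the controllable subspace of the pair $(\tilde A,\tilde B_i)$ is contained in the unobservable subspace of the pair $(\tilde B_j^\top,\tilde A^\top)$ (output matrix $\tilde B_j^\top$, state matrix $\tilde A^\top$), where $\tilde A=Q_j^{1/2}AQ_j^{-1/2}$, $\tilde B_i=Q_j^{1/2}B_i$, $\tilde B_j=Q_j^{1/2}B_j$.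
   Context: Finite-horizon LQ game: state $z^t\in\mathbb{R}^m$, initial state $z^0$, horizon $T$, dynamics $z^{t+1}=Az^t+\sum_{\ell=1}^N B_\ell u_\ell^t$ ($t=0,\ldots,T-1$), with $A\in\mathbb{R}^{m\times m}$, $B_\ell\in\mathbb{R}^{m\times m_\ell}$. Player $\ell$ chooses $U_\ell=(u_\ell^0,\ldots,u_\ell^{T-1})\in\mathbb{R}^{n_\ell}$, $n_\ell=Tm_\ell$, to minimize $\tfrac12\big(\sum_{t=0}^T (z^t)^\top Q_\ell z^t+\sum_{t=0}^{T-1}(u_\ell^t)^\top R_\ell u_\ell^t\big)$, with $Q_\ell\in\mathbb{R}^{m\times m}$, $R_\ell\in\mathbb{R}^{m_\ell\times m_\ell}$ symmetric. Let $n=\sum_\ell n_\ell$. Writing $Z=(z^0,\ldots,z^T)=\sum_\ell G_\ell U_\ell+Hz^0$, where $H=[I;A;\ldots;A^T]$ and $G_\ell\in\mathbb{R}^{(T+1)m\times Tm_\ell}$ has block $(t,s)$ ($t=0,\ldots,T$, $s=0,\ldots,T-1$) equal to $A^{t-1-s}B_\ell$ if $s\le t-1$ and $0$ otherwise, the cost of player $\ell$ is $f_\ell(U)=\tfrac12(\sum_q G_qU_q+Hz^0)^\top\bar Q_\ell(\sum_q G_qU_q+Hz^0)+\tfrac12U_\ell^\top\bar R_\ell U_\ell$ with $\bar Q_\ell=\mathrm{blkdiag}(Q_\ell,\ldots,Q_\ell)$ ($T+1$ blocks), $\bar R_\ell=\mathrm{blkdiag}(R_\ell,\ldots,R_\ell)$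 ($T$ blocks). With step sizes $\gamma_\ell>0$ and $\Gamma=\mathrm{blkdiag}(\gamma_1I_{n_1},\ldots,\gamma_NI_{n_N})$, the undisturbed learning dynamics are $U^{k+1}=WU^k-\Gamma c$ where $c=(G_1^\top\bar Q_1Hz^0,\ldots,G_N^\top\bar Q_NHz^0)$, $W=I_n-M$, and $M$ is the block matrix with $M_{\ell q}=\gamma_\ell G_\ell^\top\bar Q_\ell G_q$ for $\ell\neq q$ and $M_{\ell\ell}=\gamma_\ell(G_\ell^\top\bar Q_\ell G_\ell+\bar R_\ell)$. Disturbed dynamics: $Y^{k+1}=WY^k-\Gamma c-\Gamma d^k$ with $d^k\in\mathcal{D}_i=\{d\in\mathbb{R}^n: d_q=0\ \forall q\neq i\}$ arbitrary. Player $j\neq i$ is disturbance decoupled from player $i$ if for every initial $U^0$, with $Y^0=U^0$, one has $Y^k_j=U^k_j$ for all $k\ge0$ and every such disturbance sequence. The controllable subspace of $(\tilde A,\tilde B_i)$ is $\mathrm{im}[\tilde B_i,\tilde A\tilde B_i,\ldots,\tilde A^{m-1}\tilde B_i]$; the unobservable subspace of $(C,F)$ is $\{x: CF^px=0\ \forall p\ge0\}$. *)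

(* Defs.v *)
From mathcomp Require Import all_boot all_order all_algebra.
Set Implicit Arguments. Unset Strict Implicit. Unset Printing Implicit Defensive.
Import Order.TTheory GRing.Theory Num.Theory.
Local Open Scope ring_scope.

Section LQGame.
Variable R : realFieldType.

Variables (m N T : nat) (mu : 'I_N -> nat).
Variables (A : 'M[R]_m) (B : forall l : 'I_N, 'M[R]_(m, mu l)).
Variables (Q : 'I_N -> 'M[R]_m) (Rc : forall l : 'I_N, 'M[R]_(mu l)).
Variables (z0 : 'cV[R]_m) (gam : 'I_N -> R).

(* n_l = T * m_l, represented as \sum_(t < T) m_l (T blocks of size m_l) *)
Definition nl (l : 'I_N) : nat := (\sum_(t < T) mu l)%N.
Definition ntot : nat := (\sum_(l < N) nl l)%N.

Definition Hmat : 'M[R]_(\sum_(t < T.+1) m, m) := \mxcol_(t < T.+1) (A ^+ t).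

Definition Gmat (l : 'I_N) : 'M[R]_(\sum_(t < T.+1) m, nl l) :=
  \mxblock_(t < T.+1, s < T)
     (if (s < t)%N then A ^+ (t.-1 - s) *m B l else 0).

Definition Qbar (l : 'I_N) : 'M[R]_(\sum_(t < T.+1) m) := \mxdiag_(t < T.+1) Q l.
Definition Rbar (l : 'I_N) : 'M[R]_(nl l) := \mxdiag_(t < T) Rc l.

Definition Mmat : 'M[R]_ntot :=
  \mxblock_(l < N, q < N) (gam l *: ((Gmat l)^T *m Qbar l *m Gmat q))
  + \mxdiag_(l < N) (gam l *: Rbar l).

Definition Wmat : 'M[R]_ntot := 1%:M - Mmat.

Definition Gam : 'M[R]_ntot := \mxdiag_(l < N) (gam l)%:M.

Definition cvec : 'cV[R]_ntot :=
  \mxcol_(l < N) ((Gmat l)^T *m Qbar l *m Hmat *m z0).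

Fixpoint Utraj (U0 : 'cV[R]_ntot) (k : nat) : 'cV[R]_ntot :=
  match k with
  | 0 => U0
  | k'.+1 => Wmat *m Utraj U0 k' - Gam *m cvec
  end.

Fixpoint Ytraj (Y0 : 'cV[R]_ntot) (d : nat -> 'cV[R]_ntot) (k : nat) : 'cV[R]_ntot :=
  match k with
  | 0 => Y0
  | k'.+1 => Wmat *m Ytraj Y0 d k' - Gam *m cvec - Gam *m d k'
  end.

Definition blk (Y : 'cV[R]_ntot) (l : 'I_N) : 'cV[R]_(nl l) :=
  @submxcol R N nl 1 Y l.

Definition in_Di (i : 'I_N) (d : 'cV[R]_ntot) : Prop :=
  forall q : 'I_N, q != i -> blk d q = 0.

Definition disturbance_decoupled (j i : 'I_N) : Prop :=
  forall (U0 : 'cV[R]_ntot) (d : nat -> 'cV[R]_ntot),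
    (forall k, in_Di i (d k)) ->
    forall k, blk (Ytraj U0 d k) j = blk (Utraj U0 k) j.

End LQGame.

Definition ctrb_mx (R : realFieldType) (k p : nat) (F : 'M[R]_k) (G : 'M[R]_(k, p))
  : 'M[R]_(k, \sum_(t < k) p) := \mxrow_(t < k) (F ^+ t *m G).

Definition in_controllable_subspace (R : realFieldType) (k p : nat)
  (F : 'M[R]_k) (G : 'M[R]_(k, p)) (x : 'cV[R]_k) : Prop :=
  exists v : 'cV[R]_(\sum_(t < k) p), x = ctrb_mx F G *m v.

Definition in_unobservable_subspace (R : realFieldType) (k r : nat)
  (C : 'M[R]_(r, k)) (F : 'M[R]_k) (x : 'cV[R]_k) : Prop :=
  forall t : nat, C *m F ^+ t *m x = 0.

Definition symmetric_mx (R : realFieldType) (k : nat) (S : 'M[R]_k) : Prop := S^T = S.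

Definition pos_def (R : realFieldType) (k : nat) (S : 'M[R]_k) : Prop :=
  S^T = S /\ forall x : 'cV[R]_k, x != 0 -> 0 < (x^T *m S *m x) 0 0.

(* Main.v *)
Require Import Defs.
From mathcomp Require Import all_boot all_order all_algebra.
Set Implicit Arguments. Unset Strict Implicit. Unset Printing Implicit Defensive.
Import Order.TTheory GRing.Theory Num.Theory.
Local Open Scope ring_scope.
Lemma trmxX (R : comPzRingType) n (A : 'M[R]_n) k : (A ^+ k)^T = (A^T) ^+ k.
Proof.
elim: k => [|k IH]; first by rewrite !expr0 trmx1.
by rewrite exprS -mulmxE trmx_mul IH exprSr mulmxE.
Qed.

Lemma CH_comb (R : fieldType) n (A : 'M[R]_n) t :
  exists2 r : {poly R}, (size r <= n)%N & A ^+ t = \sum_(k < size r) r`_k *: A ^+ k.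
Proof.
case: n A => [|n] A.
  by exists 0; rewrite ?size_poly0 // big_ord0; apply/matrixP => i; case: i.
exists ('X^t %% char_poly A).
  by rewrite -ltnS -(size_char_poly A) ltn_modp monic_neq0 // char_poly_monic.
have -> : A ^+ t = horner_mx A 'X^t by rewrite rmorphXn /= horner_mx_X.
rewrite {1}(divp_eq 'X^t (char_poly A)) rmorphD rmorphM /= Cayley_Hamilton mulr0 add0r.
rewrite -{1}[_ %% _]coefK poly_def rmorph_sum /=.
by apply: eq_bigr => k _; rewrite horner_mxZ rmorphXn /= horner_mx_X.
Qed.

Lemma posdef_unit (R : realFieldType) n (S : 'M[R]_n) :
  S^T = S -> (forall x : 'cV[R]_n, x != 0 -> 0 < (x^T *m S *m x) 0 0) ->
  S \in unitmx.
Proof.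
move=> Ssym Spd; rewrite unitmxE unitfE; apply/negP => /det0P [v vn0 vS].
have : v^T != 0 by apply: contra vn0 => /eqP /(f_equal trmx); rewrite trmxK trmx0 => ->.
move/Spd; rewrite trmxK vS mul0mx mxE ltxx //.
Qed.

Lemma GQG0 (R : realFieldType) (m N T : nat) (mu : 'I_N -> nat)
  (A : 'M[R]_m) (B : forall l : 'I_N, 'M[R]_(m, mu l))
  (Q : 'I_N -> 'M[R]_m) (Rc : forall l : 'I_N, 'M[R]_(mu l))
  (z0 : 'cV[R]_m) (gam : 'I_N -> R)
  (Hgam : forall l, 0 < gam l)
  (i j : 'I_N) (Hji : j != i) :
  disturbance_decoupled T A B Q Rc z0 gam j i ->
  (Gmat T A B j)^T *m Qbar T Q j *m Gmat T A B i = 0.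
Proof.
move=> Hdec.
set X := _ *m Gmat T A B i.
pose Pm : 'M[R]_(ntot T mu, nl T mu i) :=
  \mxcol_(q < N) (if q == i then pid_mx (nl T mu i) else 0 : 'M_(nl T mu q, nl T mu i)).
set W := Wmat T A B Q Rc gam.
set G := Gam T mu gam.
set M := Mmat T A B Q Rc gam.
have HWP : submxcol (W *m (G *m Pm)) j = - ((gam j * gam i) *: X).
  rewrite /G /Gam mul_mxdiag_mxcol /W /Wmat mulmxBl mul1mx submxcolB mxcolK.
  rewrite (negbTE Hji) mulmx0 sub0r; congr (- _).
  rewrite /M /Mmat mulmxDl mul_mxblock_mxrow mul_mxdiag_mxcol submxcolD !mxcolK.
  rewrite (negbTE Hji) !mulmx0 addr0 (bigD1 i) //=.
  rewrite [X in _ + X]big1; last first.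
    by move=> q /negbTE ->; rewrite mulmx0 mulmx0.
  rewrite addr0.
  by rewrite eqxx pid_mx_1 mulmx1 mul_mx_scalar scalerA mulrC.
have key : forall u : 'cV[R]_(nl T mu i), X *m u = 0.
  move=> u.
  pose d0 := Pm *m u.
  pose d := fun k : nat => if k == 0%N then d0 else 0.
  have Hd : forall k, in_Di i (d k).
    move=> k q qi; rewrite /d /blk; case: eqP => _; last by rewrite submxcol0.
    by rewrite /d0 -submxcol_mul mxcolK (negbTE qi) mul0mx.
  have := Hdec 0 d Hd 2%N.
  rewrite /= /blk -/W -/G /d /= mulmx0 subr0 mulmx0 sub0r.
  set c := G *m _.
  rewrite mulmxBr addrAC submxcolB => /eqP; rewrite -subr_eq0 addrAC subrr add0r oppr_eq0 /d0.
  rewrite !mulmxA -submxcol_mul -mulmxA HWP => /eqP.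
  rewrite mulNmx -scalemxAl => /eqP; rewrite oppr_eq0 scaler_eq0 mulf_eq0.
  by rewrite !gt_eqF ?Hgam //= => /eqP.
apply/matrixP => a b; have := key (delta_mx b 0).
by rewrite -colE => /matrixP /(_ a 0); rewrite !mxE.
Qed.

Lemma blocks0 (R : realFieldType) (m N T : nat) (mu : 'I_N -> nat)
  (A : 'M[R]_m) (B : forall l : 'I_N, 'M[R]_(m, mu l))
  (Q : 'I_N -> 'M[R]_m) (i j : 'I_N) :
  (Gmat T A B j)^T *m Qbar T Q j *m Gmat T A B i = 0 ->
  forall a b, (a < T)%N -> (b < T)%N ->
   (A ^+ a *m B j)^T *m Q j *m (A ^+ b *m B i) = 0.
Proof.
move=> H0.
pose g (s t : nat) : 'M_(m, mu j) := if (s < t)%N then A ^+ (t.-1 - s) *m B j else 0.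
pose h (s t : nat) : 'M_(m, mu i) := if (s < t)%N then A ^+ (t.-1 - s) *m B i else 0.
pose f (s s' : nat) := \sum_(t < T.+1) (g s t)^T *m Q j *m (h s' t).
have Hf : forall s s' : 'I_T, f s s' = 0.
  move=> s s'; have := congr1 (fun M => submxblock M s s') H0.
  rewrite /Gmat tr_mxblock /Qbar mul_mxblock_mxdiag mul_mxblock mxblockK submxblock0.
  by [].
have Hf2 : forall s s', f s s' = 0.
  move=> s s'; case: (ltnP s T) => [sT|Ts]; case: (ltnP s' T) => [s'T|Ts'].
  - exact: (Hf (Ordinal sT) (Ordinal s'T)).
  - apply: big1 => t _; rewrite /h ifF ?mulmx0 //; apply/negbTE; rewrite -leqNgt.
    by apply: leq_trans Ts'; rewrite -ltnS.
  - apply: big1 => t _; rewrite /g ifF ?trmx0 ?mul0mx //; apply/negbTE; rewrite -leqNgt.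
    by apply: leq_trans Ts; rewrite -ltnS.
  - apply: big1 => t _; rewrite /g ifF ?trmx0 ?mul0mx //; apply/negbTE; rewrite -leqNgt.
    by apply: leq_trans Ts; rewrite -ltnS.
have rec : forall s s', f s s' = (if (s < T)%N && (s' < T)%N then
     (A ^+ (T.-1 - s) *m B j)^T *m Q j *m (A ^+ (T.-1 - s') *m B i) else 0)
     + f s.+1 s'.+1.
  move=> s s'; rewrite /f big_ord_recr big_ord_recl /=.
  have E0 : (g s.+1 0%N)^T *m Q j *m h s'.+1 0%N = 0 by rewrite /g /= trmx0 !mul0mx.
  rewrite E0 add0r [LHS]addrC.
  congr (_ + _).
    rewrite /g /h /=; case: (ltnP s T) => sT; case: (ltnP s' T) => s'T //=.
    - by rewrite !mulmx0.
    - first [ by rewrite linear0 !mul0mx | by rewrite raddf0 !mul0mx | by rewrite trmx0 !mul0mx | by rewrite (@trmx0 R) !mul0mx | by rewrite !mul0mx ].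
  apply: eq_bigr => t _; rewrite /g /h /= !ltnS.
  by rewrite add0n !subnS !predn_sub.
move=> a b aT bT.
have := rec (T.-1 - a)%N (T.-1 - b)%N.
have T0 : (0 < T)%N by apply: leq_ltn_trans aT.
have aT' : (a <= T.-1)%N by rewrite -ltnS prednK.
have bT' : (b <= T.-1)%N by rewrite -ltnS prednK.
have Ta : (T.-1 - a < T)%N by apply: leq_ltn_trans (leq_subr _ _) _; rewrite prednK.
have Tb : (T.-1 - b < T)%N by apply: leq_ltn_trans (leq_subr _ _) _; rewrite prednK.
by rewrite !Hf2 addr0 Ta Tb /= !subKn.
Qed.

Lemma Pall (R : realFieldType) (m N T : nat) (mu : 'I_N -> nat)
  (A : 'M[R]_m) (B : forall l : 'I_N, 'M[R]_(m, mu l))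
  (Q : 'I_N -> 'M[R]_m) (i j : 'I_N) :
  (forall a b, (a < T)%N -> (b < T)%N ->
   (A ^+ a *m B j)^T *m Q j *m (A ^+ b *m B i) = 0) ->
  (m <= T)%N -> forall t b, (b < T)%N ->
   (A ^+ t *m B j)^T *m Q j *m (A ^+ b *m B i) = 0.
Proof.
move=> HP mT t b bT.
have [r rsz ->] := CH_comb A t.
rewrite mulmx_suml raddf_sum /= !mulmx_suml big1 // => k _.
rewrite -scalemxAl linearZ /= -!scalemxAl HP ?scaler0 //.
exact: leq_trans (ltn_ord k) (leq_trans rsz mT).
Qed.

Unset Implicit Arguments.
Set Strict Implicit.

Theorem corollary2 (R : realFieldType) (m N T : nat) (mu : 'I_N -> nat)
  (A : 'M[R]_m) (B : forall l : 'I_N, 'M[R]_(m, mu l))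
  (Q : 'I_N -> 'M[R]_m) (Rc : forall l : 'I_N, 'M[R]_(mu l))
  (z0 : 'cV[R]_m) (gam : 'I_N -> R)
  (HQsym : forall l, symmetric_mx (Q l))
  (HRsym : forall l, symmetric_mx (Rc l))
  (Hgam : forall l, 0 < gam l)
  (i j : 'I_N) (Hji : j != i) :
  disturbance_decoupled T A B Q Rc z0 gam j i ->
  (\mxcol_(t < T) ((B j)^T *m (A^T) ^+ t)) *m Q j
     *m (\mxrow_(s < T) (A ^+ s *m B i)) = 0
  /\
  (pos_def (Q j) -> (m <= T)%N ->
   forall S : 'M[R]_m, pos_def S -> S *m S = Q j ->
   let At := S *m A *m invmx S in
   let Bti := S *m B i in
   let Btj := S *m B j in
   forall x : 'cV[R]_m,
     in_controllable_subspace At Bti x ->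
     in_unobservable_subspace Btj^T At^T x).
Proof.
move=> Hdec.
have HP := blocks0 (GQG0 Hgam Hji Hdec).
split.
  rewrite mxcol_mul mul_mxcol_mxrow.
  apply/mxblockP => a b; rewrite mxblockK submxblock0.
  by rewrite -trmxX -trmx_mul HP.
move=> _ mT S [Ssym Spd] SS At Bti Btj x [v ->] t.
have Su := posdef_unit Ssym Spd.
have AtX : forall k p (Y : 'M[R]_(m, p)), At ^+ k *m (S *m Y) = S *m (A ^+ k *m Y).
  move=> k p Y; elim: k => [|k IH]; first by rewrite !expr0 !mul1mx.
  rewrite exprS -mulmxE -mulmxA IH /At -!mulmxA mulKmx //.
  by rewrite exprS -mulmxE -mulmxA.
rewrite -trmxX -trmx_mul /Btj AtX /ctrb_mx /Bti.
under eq_mxrow => s do rewrite AtX.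
rewrite mulmxA mul_mxrow.
have -> : \mxrow_(s < m) ((S *m (A ^+ t *m B j))^T *m (S *m (A ^+ s *m B i))) = 0.
  apply/mxrowP => s; rewrite mxrowK submxrow0.
  rewrite trmx_mul Ssym -mulmxA (mulmxA S) SS mulmxA.
  apply: (Pall HP mT); exact: leq_trans (ltn_ord s) mT.
by rewrite mul0mx.
Qed.
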